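(* Fix $k\in\mathbb Z^+$ and let $0<\varepsilon_1<0.001$. There exists $\varepsilon_0=\varepsilon_0(k,\varepsilon_1)$ with $0<\varepsilon_0<\varepsilon_1$ such that, for any population protocol $P$ with $k$ states and any configuration $z_0$, there exists $\varepsilon=\varepsilon(P,z_0)\in[\varepsilon_0,\varepsilon_1]$ such that for every rule $j$ of $P$ exactly one of the following holds: (i) for all $z\in B_{n^{\varepsilon_0}}(z_0)$, $p_j(z)\le n^{\varepsilon-1}$; (ii) for all $z\in B_{n^{\varepsilon_0}}(z_0)$, $p_j(z)\ge n^{24\varepsilon-1}$; and for every state $i\in\{1,\dots,k\}$ exactly one of the following holds: (iii) for all $z\in B_{n^{\varepsilon_0}}(z_0)$, $z^{(i)}\le n^{\varepsilon}$; (iv) for all $z\in B_{n^{\varepsilon_0}}(z_0)$, $z^{(i)}\ge n^{24\varepsilon}$.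
   Context: Population protocol with states $\{1,\dots,k\}$ on $n$ agents: in each step the scheduler picks an unordered pair of distinct agents uniformly at random; the protocol has rules $j=1,\dots,r$ (with $r\le k^4$) of the form $\{i_1(j),i_2(j)\}\to\{o_1(j),o_2(j)\}$, rule $j$ being executed with probability $q_j$ when the selected pair has states $\{i_1(j),i_2(j)\}$ (rule probabilities may depend on $n$). A configuration is $z=(z^{(1)},\dots,z^{(k)})\in\{0,\dots,n\}^k$ with $\sum_i z^{(i)}=n$, $z^{(i)}$ the number of agents in state $i$. $p_j(z)$ denotes the probability that rule $j$ is the next rule executed in configuration $z$ (so $p_j(z)=q_j\frac{z^{(i_1(j))}z^{(i_2(j))}}{n^2}(1-O(1/n))$). For $d>0$, the $d$-box around $z_0$ is $B_d(z_0)=\{z:\ z_0^{(i)}/d\le z^{(i)}\le d\max\{1,z_0^{(i)}\}\text{ for all }1\le i\le k\}$. *)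

(* Defs.v *)
From Stdlib Require Import Reals Lra Lia Arith Bool.
Open Scope R_scope.

Fixpoint sumR (m : nat) (f : nat -> R) : R :=
  match m with
  | O => 0
  | S m' => sumR m' f + f m'
  end.

Fixpoint sumN (m : nat) (f : nat -> nat) : nat :=
  match m with
  | O => 0%nat
  | S m' => (sumN m' f + f m')%nat
  end.

Definition same_upair (a b c d : nat) : bool :=
  ((a =? c) && (b =? d)) || ((a =? d) && (b =? c)).

(* A population protocol with k states {0,...,k-1}; rule j (j < nrules) is
   {in1 j, in2 j} -> {out1 j, out2 j}, executed with probability q j when the
   selected pair has states {in1 j, in2 j}.  The q j may be arbitrary
   (in particular they may depend on n, since a protocol is chosen per n).
   For every unordered pair of states, the probabilities of the rules with
   that input pair sum to at most 1 (they are mutually exclusive events). *)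
Record protocol (k : nat) := Protocol {
  nrules : nat;
  in1 : nat -> nat;
  in2 : nat -> nat;
  out1 : nat -> nat;
  out2 : nat -> nat;
  q : nat -> R;
  nrules_le : (nrules <= k ^ 4)%nat;
  rules_in_range : forall j, (j < nrules)%nat ->
     (in1 j < k /\ in2 j < k /\ out1 j < k /\ out2 j < k)%nat;
  q_range : forall j, (j < nrules)%nat -> 0 <= q j <= 1;
  q_sum : forall a b, (a < k)%nat -> (b < k)%nat ->
     sumR nrules (fun j => if same_upair (in1 j) (in2 j) a b then q j else 0) <= 1
}.
Arguments nrules {k}.
Arguments in1 {k}.
Arguments in2 {k}.
Arguments out1 {k}.
Arguments out2 {k}.
Arguments q {k}.

(* z is a configuration of n agents over k states: z i = number of agents in
   state i (only the values z 0, ..., z (k-1) are meaningful). *)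
Definition config (k n : nat) (z : nat -> nat) : Prop :=
  sumN k z = n.

Definition npairs (z : nat -> nat) (a b : nat) : R :=
  if a =? b then INR (z a) * (INR (z a) - 1) / 2 else INR (z a) * INR (z b).

(* p_j(z): probability that rule j is the rule executed in the next step from
   configuration z of n agents: an unordered pair of distinct agents is chosen
   uniformly among the n(n-1)/2 pairs, and rule j fires with probability q j
   if the pair has states {in1 j, in2 j}. *)
Definition prule {k : nat} (P : protocol k) (n : nat) (j : nat) (z : nat -> nat) : R :=
  q P j * npairs z (in1 P j) (in2 P j) / (INR n * (INR n - 1) / 2).

Definition box (k n : nat) (d : R) (z0 z : nat -> nat) : Prop :=
  config k n z /\
  forall i, (i < k)%nat ->
    INR (z0 i) / d <= INR (z i) <= d * Rmax 1 (INR (z0 i)).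

Definition exactly_one (A B : Prop) : Prop := (A /\ ~ B) \/ (~ A /\ B).

(* Main.v *)
Require Import Defs.
From Stdlib Require Import Reals Lra Lia List Arith Bool.
Open Scope R_scope.

Lemma Rpower_pos x y : 0 < Rpower x y.
Proof. unfold Rpower; apply exp_pos. Qed.

Lemma Rpower_ln_max N U : 1 < N ->
  Rpower N (ln (Rmax U 1) / ln N) = Rmax U 1.
Proof.
  intros HN. unfold Rpower.
  assert (0 < ln N) by (rewrite <- ln_1; apply ln_increasing; lra).
  replace (ln (Rmax U 1) / ln N * ln N) with (ln (Rmax U 1)) by (field; lra).
  apply exp_ln. pose proof (Rmax_r U 1); lra.
Qed.

Lemma generic (N e0 eps v U C : R) (S : (nat -> nat) -> Prop) (f : (nat -> nat) -> R) :
  1 < N -> 0 < e0 -> 6 * e0 <= eps -> C = Rpower N (6 * e0) ->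
  v = ln (Rmax U 1) / ln N ->
  (v <= eps \/ 24 * eps + 6 * e0 <= v) ->
  (forall z, S z -> f z <= U) ->
  (U <= C \/ forall z, S z -> U <= f z * C) ->
  (forall z, S z -> f z <= Rpower N eps) \/ (forall z, S z -> f z >= Rpower N (24 * eps)).
Proof.
  intros HN He0 Heps HC Hv Hgood HA HB.
  assert (HW : Rpower N v = Rmax U 1) by (subst v; apply Rpower_ln_max; auto).
  pose proof (Rmax_l U 1) as HU1. pose proof (Rmax_r U 1) as HU2.
  destruct Hgood as [Hg|Hg].
  - left. intros z Hz. specialize (HA z Hz).
    assert (Rpower N v <= Rpower N eps) by (apply Rle_Rpower; lra). lra.
  - assert (Hlt : Rpower N (6 * e0) < Rpower N v) by (apply Rpower_lt; lra).
    assert (H1 : 1 <= Rpower N (6 * e0)).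
    { rewrite <- (Rpower_O N) by lra. apply Rle_Rpower; lra. }
    destruct HB as [HB|HB].
    + exfalso. subst C. assert (Rmax U 1 <= Rpower N (6*e0)).
      { unfold Rmax; destruct (Rle_dec U 1); lra. }
      lra.
    + right. intros z Hz. specialize (HB z Hz).
      assert (HUe : Rmax U 1 = U).
      { unfold Rmax in *; destruct (Rle_dec U 1); lra. }
      assert (Rpower N (24 * eps + 6 * e0) <= Rpower N v) by (apply Rle_Rpower; lra).
      rewrite Rpower_plus in H. subst C.
      pose proof (Rpower_pos N (6*e0)).
      pose proof (Rpower_pos N (24*eps)).
      apply Rle_ge.
      apply (Rmult_le_reg_r (Rpower N (6 * e0))); auto. lra.
Qed.

Lemma eo (S : (nat -> nat) -> Prop) (f : (nat -> nat) -> R) z0 A B :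
  S z0 -> A < B ->
  ((forall z, S z -> f z <= A) \/ (forall z, S z -> f z >= B)) ->
  exactly_one (forall z, S z -> f z <= A) (forall z, S z -> f z >= B).
Proof.
  intros Hz AB [H|H]; unfold exactly_one.
  - left. split; auto. intros H'. specialize (H z0 Hz). specialize (H' z0 Hz). lra.
  - right. split; auto. intros H'. specialize (H z0 Hz). specialize (H' z0 Hz). lra.
Qed.

Definition badb (e : nat -> R) (c : R) (t : nat) (v : R) : bool :=
  if Rlt_dec (e t) v then if Rlt_dec v (24 * e t + c) then true else false else false.

Lemma badb_false e c t v : badb e c t v = false -> v <= e t \/ 24 * e t + c <= v.
Proof.
  unfold badb. destruct (Rlt_dec (e t) v); destruct (Rlt_dec v (24 * e t + c)); intros H;
  try discriminate; lra.
Qed.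

Lemma filter_lt {A} (p : A -> bool) (l : list A) :
  existsb p l = true -> (length (filter (fun x => negb (p x)) l) < length l)%nat.
Proof.
  induction l as [|x l IH]; simpl; [discriminate|].
  destruct (p x) eqn:E; simpl.
  - intros _. pose proof (filter_length_le (fun x => negb (p x)) l). lia.
  - intros H. specialize (IH H). lia.
Qed.

Lemma pigeon (e : nat -> R) c M :
  (forall t s v, (t < s)%nat -> (s <= M)%nat -> badb e c s v = true -> badb e c t v = false) ->
  forall m, (m <= M)%nat -> forall l : list R, (length l <= m)%nat ->
  exists t, (t <= m)%nat /\ forall v, In v l -> badb e c t v = false.
Proof.
  intros Hdis m. induction m as [|m IH]; intros Hm l Hl.
  - exists 0%nat. split; [lia|]. destruct l; simpl in *; [tauto|lia].
  - destruct (existsb (badb e c (S m)) l) eqn:E.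
    + pose proof (filter_lt _ _ E) as Hlen.
      destruct (IH ltac:(lia) (filter (fun x => negb (badb e c (S m) x)) l) ltac:(lia))
        as [t [Ht Hv]].
      exists t. split; [lia|]. intros v Hin.
      destruct (badb e c (S m) v) eqn:Eb.
      * apply (Hdis t (S m)); auto; lia.
      * apply Hv. apply filter_In. rewrite Eb. auto.
    + exists (S m). split; [lia|]. intros v Hin.
      destruct (badb e c (S m) v) eqn:Eb; auto.
      assert (existsb (badb e c (S m)) l = true) by (apply existsb_exists; eauto).
      congruence.
Qed.

Lemma sumN_ge k z i : (i < k)%nat -> (z i <= sumN k z)%nat.
Proof.
  induction k; simpl; intros H; [lia|].
  destruct (Nat.eq_dec i k); [subst; lia|]. specialize (IHk ltac:(lia)). lia.
Qed.

Lemma Rsmall Q N d X : 0 <= Q <= 1 -> 5 <= N -> 2 <= d -> 0 <= X <= d^4 * (N-1) ->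
  2 * Q * X / (N - 1) <= d^6.
Proof.
  intros HQ HN Hd HX.
  assert (h4 : 0 <= d^4) by (apply pow_le; lra).
  assert (h2 : 4 <= d^2) by nra.
  replace (d^6) with (d^2 * d^4) by ring.
  unfold Rdiv. apply (Rmult_le_reg_r (N-1)); [lra|].
  rewrite Rmult_assoc, Rinv_l, Rmult_1_r by lra.
  assert (2*Q*X <= 2 * (d^4*(N-1))) by nra.
  assert (2 * (d^4*(N-1)) <= d^2*d^4*(N-1)).
  { assert (0 <= d^4*(N-1)) by nra. nra. }
  lra.
Qed.

Lemma Rab Q N d x0a x0b xa xb : 0 <= Q -> 1 < N -> 1 <= d -> 0 <= x0a -> 0 <= x0b ->
  x0a / d <= xa -> x0b / d <= xb ->
  2 * Q * ((d * x0a) * (d * x0b)) / (N - 1) <= 2 * Q * (xa * xb) / (N - 1) * d^6.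
Proof.
  intros HQ HN Hd Ha Hb Hxa Hxb.
  set (G := 2 * Q / (N-1)).
  assert (HG : 0 <= G) by (unfold G; apply Rmult_le_pos; [lra| apply Rlt_le, Rinv_0_lt_compat; lra]).
  replace (2 * Q * ((d * x0a) * (d * x0b)) / (N - 1)) with (G * d^4 * ((x0a/d) * (x0b/d)))
    by (unfold G; field; lra).
  replace (2 * Q * (xa * xb) / (N - 1) * d^6) with (G * d^6 * (xa*xb)) by (unfold G; field; lra).
  assert (0 <= x0a/d) by (apply Rmult_le_pos; [lra| apply Rlt_le, Rinv_0_lt_compat; lra]).
  assert (0 <= x0b/d) by (apply Rmult_le_pos; [lra| apply Rlt_le, Rinv_0_lt_compat; lra]).
  assert (h1 : (x0a/d) * (x0b/d) <= xa * xb) by (apply Rmult_le_compat; lra).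
  assert (h2 : d^4 <= d^6) by (apply Rle_pow; [lra|lia]).
  assert (0 <= d^4) by (apply pow_le; lra).
  assert (0 <= xa*xb) by nra.
  apply Rle_trans with (G * d^4 * (xa*xb)).
  - apply Rmult_le_compat_l; [apply Rmult_le_pos|]; lra.
  - apply Rmult_le_compat_r; [lra|]. apply Rmult_le_compat_l; lra.
Qed.

Lemma Raa Q N d x0 xa : 0 <= Q -> 1 < N -> 2 <= d -> 2 * d <= x0 -> x0 / d <= xa ->
  2 * Q * ((d * x0) * (d * x0)) / (N - 1) <= 2 * Q * (xa * (xa - 1) / 2) / (N - 1) * d^6.
Proof.
  intros HQ HN Hd H0 Hxa.
  set (G := 2 * Q / (N-1)).
  assert (HG : 0 <= G) by (unfold G; apply Rmult_le_pos; [lra| apply Rlt_le, Rinv_0_lt_compat; lra]).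
  set (y := x0 / d).
  assert (Hy : 2 <= y).
  { unfold y. apply (Rmult_le_reg_r d); [lra|]. unfold Rdiv. rewrite Rmult_assoc, Rinv_l, Rmult_1_r by lra. lra. }
  replace (2 * Q * ((d * x0) * (d * x0)) / (N - 1)) with (G * d^4 * (y*y))
    by (unfold G, y; field; lra).
  replace (2 * Q * (xa * (xa - 1) / 2) / (N - 1) * d^6) with (G * d^6 * (xa * (xa - 1) / 2))
    by (unfold G; field; lra).
  assert (h1 : y * y <= 4 * (xa * (xa - 1) / 2)).
  { assert (y <= xa) by (unfold y; lra).
    assert (0 <= (xa - y) * (xa + y)) by (apply Rmult_le_pos; lra).
    assert (0 <= xa * (xa - 2)) by (apply Rmult_le_pos; lra). nra. }
  assert (h4 : 0 <= d^4) by (apply pow_le; lra).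
  assert (h6 : d^6 = d^4 * d^2) by ring.
  assert (h2 : 4 <= d^2) by nra.
  assert (0 <= xa * (xa - 1) / 2) by nra.
  apply Rle_trans with (G * d^4 * (4 * (xa * (xa - 1) / 2))).
  - apply Rmult_le_compat_l; [apply Rmult_le_pos|]; lra.
  - rewrite h6. replace (G * (d^4 * d^2) * (xa * (xa - 1) / 2)) with
      (G * d^4 * (d^2 * (xa * (xa - 1) / 2))) by ring.
    apply Rmult_le_compat_l; [apply Rmult_le_pos; lra|]. nra.
Qed.

Lemma RS d x0 x : 1 <= d -> 0 <= x0 -> x0 / d <= x -> d * x0 <= x * d^6.
Proof.
  intros Hd H0 Hx.
  replace (d * x0) with (d^2 * (x0/d)) by (field; lra).
  assert (0 <= x0/d) by (apply Rmult_le_pos; [lra| apply Rlt_le, Rinv_0_lt_compat; lra]).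
  assert (d^2 <= d^6) by (apply Rle_pow; [lra|lia]).
  assert (0 <= d^2) by (apply pow_le; lra).
  apply Rle_trans with (d^2 * x); [apply Rmult_le_compat_l; lra|]. nra.
Qed.

Lemma div_mono x A B : 0 <= x -> 0 < B -> B <= A -> x / A <= x / B.
Proof.
  intros. unfold Rdiv. apply Rmult_le_compat_l; auto. apply Rinv_le_contravar; auto.
Qed.

Lemma Rpower_minus1 N a : 0 < N -> Rpower N (a - 1) = Rpower N a / N.
Proof.
  intros. unfold Rminus. rewrite Rpower_plus, Rpower_Ropp, Rpower_1 by auto. reflexivity.
Qed.

Lemma le_div_N N p X : 0 < N -> N * p <= X -> p <= X / N.
Proof.
  intros HN H. apply (Rmult_le_reg_l N); auto. unfold Rdiv.
  replace (N * (X * / N)) with X by (field; lra). auto.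
Qed.

Lemma ge_div_N N p X : 0 < N -> N * p >= X -> p >= X / N.
Proof.
  intros HN H. apply Rle_ge. apply (Rmult_le_reg_l N); auto. unfold Rdiv.
  replace (N * (X * / N)) with X by (field; lra). lra.
Qed.

Theorem lemma26 (k : nat) (eps1 : R) :
  (1 <= k)%nat -> 0 < eps1 < 1 / 1000 ->
  exists eps0 : R, 0 < eps0 < eps1 /\
  exists n0 : nat, forall n : nat, (n0 <= n)%nat ->
  forall (P : protocol k) (z0 : nat -> nat), config k n z0 ->
  exists eps : R, eps0 <= eps <= eps1 /\
    (forall j, (j < nrules P)%nat ->
       exactly_one
         (forall z, box k n (Rpower (INR n) eps0) z0 z ->
            prule P n j z <= Rpower (INR n) (eps - 1))
         (forall z, box k n (Rpower (INR n) eps0) z0 z ->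
            prule P n j z >= Rpower (INR n) (24 * eps - 1))) /\
    (forall i, (i < k)%nat ->
       exactly_one
         (forall z, box k n (Rpower (INR n) eps0) z0 z ->
            INR (z i) <= Rpower (INR n) eps)
         (forall z, box k n (Rpower (INR n) eps0) z0 z ->
            INR (z i) >= Rpower (INR n) (24 * eps))).
Proof.
  intros Hk [He1 He1'].
  set (M := (k + k^4)%nat).
  assert (H25 : forall t, 0 < 25 ^ t) by (intros; apply pow_lt; lra).
  assert (H25m : forall t s, (t <= s)%nat -> 25 ^ t <= 25 ^ s) by (intros; apply Rle_pow; [lra|auto]).
  set (eps0 := eps1 / (6 * 25 ^ (S M))).
  assert (He0 : 0 < eps0).
  { unfold eps0. apply Rdiv_lt_0_compat; auto. specialize (H25 (S M)); lra. }
  assert (He0' : 6 * eps0 = eps1 / 25 ^ (S M)).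
  { unfold eps0. field. specialize (H25 (S M)); lra. }
  set (e := fun t : nat => eps1 / 25 ^ t).
  assert (He_le : forall t, e t <= eps1).
  { intros t. unfold e. replace eps1 with (eps1 / 25 ^ 0) at 2 by (simpl; field).
    apply div_mono; [lra|simpl; lra|]. apply H25m; lia. }
  assert (He_ge : forall t, (t <= M)%nat -> 6 * eps0 <= e t).
  { intros t Ht. rewrite He0'. unfold e. apply div_mono; [lra|auto|]. apply H25m; lia. }
  assert (He0_lt : eps0 < eps1).
  { assert (6 * eps0 <= e 0%nat) by (apply He_ge; lia). specialize (He_le 0%nat). lra. }
  exists eps0. split; [lra|].
  destruct (INR_archimed 1 (exp (ln 2 / eps0))) as [n1 Hn1]; [lra|].
  exists (Nat.max n1 5). intros n Hn P z0 Hz0.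
  set (N := INR n).
  assert (HN5 : 5 <= N).
  { unfold N. replace 5 with (INR 5) by (simpl; ring). apply le_INR. lia. }
  assert (HN1 : exp (ln 2 / eps0) < N).
  { unfold N. assert (INR n1 <= INR n) by (apply le_INR; lia). lra. }
  set (d := Rpower N eps0).
  assert (Hd : 2 <= d).
  { unfold d, Rpower. rewrite <- (exp_ln 2) at 1 by lra. apply Rlt_le, exp_increasing.
    assert (ln (exp (ln 2 / eps0)) < ln N) by (apply ln_increasing; [apply exp_pos|auto]).
    rewrite ln_exp in H.
    apply (Rmult_lt_compat_l eps0) in H; auto.
    replace (eps0 * (ln 2 / eps0)) with (ln 2) in H by (field; lra). lra. }
  assert (HC : d^6 = Rpower N (6 * eps0)).
  { unfold d. rewrite <- Rpower_pow by apply Rpower_pos. rewrite Rpower_mult. f_equal. simpl. ring. }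
  assert (Hbox0 : box k n d z0 z0).
  { split; auto. intros i Hi. pose proof (pos_INR (z0 i)).
    split.
    - apply (Rmult_le_reg_l d); [lra|]. unfold Rdiv.
      replace (d * (INR (z0 i) * / d)) with (INR (z0 i)) by (field; lra). nra.
    - pose proof (Rmax_r 1 (INR (z0 i))). pose proof (Rmax_l 1 (INR (z0 i))). nra. }
  assert (HzN : forall i, (i < k)%nat -> INR (z0 i) <= N).
  { intros i Hi. unfold N. apply le_INR. rewrite <- Hz0. apply sumN_ge; auto. }
  set (vS := fun i : nat => ln (Rmax (d * Rmax 1 (INR (z0 i))) 1) / ln N).
  set (UR := fun j : nat => 2 * q P j * ((d * Rmax 1 (INR (z0 (in1 P j)))) *
                                        (d * Rmax 1 (INR (z0 (in2 P j))))) / (N - 1)).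
  set (vR := fun j : nat => ln (Rmax (UR j) 1) / ln N).
  set (l := map vS (seq 0 k) ++ map vR (seq 0 (nrules P))).
  assert (Hlen : (length l <= M)%nat).
  { unfold l, M. rewrite length_app, !length_map, !length_seq. pose proof (nrules_le _ P). lia. }
  assert (Hdis : forall t s v, (t < s)%nat -> (s <= M)%nat ->
            badb e (6 * eps0) s v = true -> badb e (6 * eps0) t v = false).
  { intros t s v Hts HsM Hb. unfold badb in *.
    destruct (Rlt_dec (e s) v); [|discriminate].
    destruct (Rlt_dec v (24 * e s + 6 * eps0)); [|discriminate].
    assert (Hes : e s <= e t / 25).
    { unfold e. replace (eps1 / 25 ^ t / 25) with (eps1 / 25 ^ (S t)) by (simpl; field; specialize (H25 t); lra).
      apply div_mono; [lra|auto|]. apply H25m; lia. }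
    assert (He6 : 6 * eps0 <= e t / 25).
    { rewrite He0'. unfold e. replace (eps1 / 25 ^ t / 25) with (eps1 / 25 ^ (S t)) by (simpl; field; specialize (H25 t); lra).
      apply div_mono; [lra|auto|]. apply H25m; lia. }
    destruct (Rlt_dec (e t) v); [|reflexivity]. exfalso. lra. }
  destruct (pigeon e (6 * eps0) M Hdis M (Nat.le_refl M) l Hlen) as [t [Ht Hl]].
  assert (Het := He_ge t Ht).
  exists (e t). split; [split; [lra|apply He_le]|].
  assert (HN : 1 < N) by lra.
  assert (Hlt : Rpower N (e t) < Rpower N (24 * e t)) by (apply Rpower_lt; lra).
  split.
  - intros j Hj.
    destruct (rules_in_range _ P j Hj) as [Ha [Hb _]].
    destruct (q_range _ P j Hj) as [HQ0 HQ1].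
    assert (Hgood : vR j <= e t \/ 24 * e t + 6 * eps0 <= vR j).
    { apply badb_false. apply Hl. unfold l. apply in_or_app. right. apply in_map. apply in_seq. lia. }
    assert (Hf : forall z, INR n * prule P n j z = 2 * q P j * npairs z (in1 P j) (in2 P j) / (N - 1)).
    { intros z. unfold prule. fold N. field. lra. }
    assert (HA : forall z, box k n d z0 z -> INR n * prule P n j z <= UR j).
    { intros z [_ Hz]. rewrite Hf. unfold UR.
      destruct (Hz _ Ha) as [_ Hza]. destruct (Hz _ Hb) as [_ Hzb].
      pose proof (pos_INR (z (in1 P j))). pose proof (pos_INR (z (in2 P j))).
      assert (Hnp : npairs z (in1 P j) (in2 P j) <= INR (z (in1 P j)) * INR (z (in2 P j))).
      { unfold npairs. destruct (in1 P j =? in2 P j) eqn:E.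
        - apply Nat.eqb_eq in E. rewrite E. nra.
        - lra. }
      unfold Rdiv. apply Rmult_le_compat_r; [apply Rlt_le, Rinv_0_lt_compat; lra|].
      apply Rmult_le_compat_l; [lra|].
      apply Rle_trans with (1 := Hnp). apply Rmult_le_compat; lra. }
    assert (HB : UR j <= d^6 \/ forall z, box k n d z0 z -> UR j <= INR n * prule P n j z * d^6).
    { assert (Hd1 : 1 <= d) by lra.
      assert (Hdd : 4 <= d*d) by nra.
      assert (Hd4 : 16 <= d^4) by (replace (d^4) with ((d*d)*(d*d)) by ring; nra).
      assert (Hd2 : 4 <= d^2) by (simpl; lra).
      assert (HMb : Rmax 1 (INR (z0 (in2 P j))) <= N).
      { apply Rmax_lub; [lra|apply HzN; auto]. }
      assert (HMa : Rmax 1 (INR (z0 (in1 P j))) <= N).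
      { apply Rmax_lub; [lra|apply HzN; auto]. }
      pose proof (Rmax_l 1 (INR (z0 (in1 P j)))). pose proof (Rmax_l 1 (INR (z0 (in2 P j)))).
      destruct (in1 P j =? in2 P j) eqn:Eab.
      - apply Nat.eqb_eq in Eab. unfold UR. rewrite <- Eab.
        set (a := in1 P j) in *.
        destruct (Rle_dec (2 * d) (INR (z0 a))) as [Hbig|Hsmall].
        + right. intros z [_ Hz]. rewrite Hf. rewrite <- Eab. fold a.
          unfold npairs. rewrite Nat.eqb_refl.
          rewrite Rmax_right by lra.
          apply Raa; try lra. apply (Hz a Ha).
        + left. apply Rsmall; try lra.
          set (Ma := Rmax 1 (INR (z0 a))) in *.
          assert (Ma <= 2 * d) by (apply Rmax_lub; lra).
          split; [apply Rmult_le_pos; apply Rmult_le_pos; lra|].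
          assert (d * Ma <= 2 * d * d) by nra.
          assert (0 <= d * Ma) by (apply Rmult_le_pos; lra).
          assert (HX : d * Ma * (d * Ma) <= (2*d*d) * (2*d*d)) by (apply Rmult_le_compat; lra).
          replace ((2*d*d) * (2*d*d)) with (4 * d^4) in HX by ring.
          assert (0 <= (N - 5) * d^4) by (apply Rmult_le_pos; lra). nra.
      - destruct (Nat.eq_dec (z0 (in1 P j)) 0) as [E1|E1];
        [|destruct (Nat.eq_dec (z0 (in2 P j)) 0) as [E2|E2]].
        + left. unfold UR. rewrite E1. simpl INR. rewrite (Rmax_left 1 0) by lra.
          apply Rsmall; try lra.
          set (Mb := Rmax 1 (INR (z0 (in2 P j)))) in *.
          split; [apply Rmult_le_pos; apply Rmult_le_pos; lra|].
          replace (d * 1 * (d * Mb)) with (d^2 * Mb) by ring.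
          replace (d^4) with (d^2 * d^2) by ring.
          assert (d^2 * Mb <= d^2 * N) by (apply Rmult_le_compat_l; lra).
          assert (d^2 * N <= d^2 * (d^2 * (N - 1))).
          { apply Rmult_le_compat_l; [lra|]. nra. }
          lra.
        + left. unfold UR. rewrite E2. simpl INR. rewrite (Rmax_left 1 0) by lra.
          apply Rsmall; try lra.
          set (Ma := Rmax 1 (INR (z0 (in1 P j)))) in *.
          split; [apply Rmult_le_pos; apply Rmult_le_pos; lra|].
          replace (d * Ma * (d * 1)) with (d^2 * Ma) by ring.
          replace (d^4) with (d^2 * d^2) by ring.
          assert (d^2 * Ma <= d^2 * N) by (apply Rmult_le_compat_l; lra).
          assert (d^2 * N <= d^2 * (d^2 * (N - 1))).
          { apply Rmult_le_compat_l; [lra|]. nra. }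
          lra.
        + right. intros z [_ Hz]. rewrite Hf. unfold UR, npairs. rewrite Eab.
          assert (1 <= INR (z0 (in1 P j))) by (apply (le_INR 1); lia).
          assert (1 <= INR (z0 (in2 P j))) by (apply (le_INR 1); lia).
          rewrite !Rmax_right by lra.
          apply Rab; try lra; [apply (Hz _ Ha)|apply (Hz _ Hb)]. }
    destruct (generic N eps0 (e t) (vR j) (UR j) (d^6) (box k n d z0)
               (fun z => INR n * prule P n j z) HN He0 Het HC eq_refl Hgood HA HB) as [H|H].
    + apply (eo _ _ z0); [exact Hbox0| |].
      * rewrite !Rpower_minus1 by lra. unfold Rdiv. apply Rmult_lt_compat_r; [apply Rinv_0_lt_compat; lra|auto].
      * left. intros z Hz. rewrite Rpower_minus1 by lra. apply le_div_N; [lra|]. apply H; auto.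
    + apply (eo _ _ z0); [exact Hbox0| |].
      * rewrite !Rpower_minus1 by lra. unfold Rdiv. apply Rmult_lt_compat_r; [apply Rinv_0_lt_compat; lra|auto].
      * right. intros z Hz. rewrite Rpower_minus1 by lra. apply ge_div_N; [lra|]. apply H; auto.
  - intros i Hi.
    assert (Hgood : vS i <= e t \/ 24 * e t + 6 * eps0 <= vS i).
    { apply badb_false. apply Hl. unfold l. apply in_or_app. left. apply in_map. apply in_seq. lia. }
    assert (HA : forall z, box k n d z0 z -> INR (z i) <= d * Rmax 1 (INR (z0 i))).
    { intros z [_ Hz]. apply (Hz i Hi). }
    assert (HB : d * Rmax 1 (INR (z0 i)) <= d^6 \/
                 forall z, box k n d z0 z -> d * Rmax 1 (INR (z0 i)) <= INR (z i) * d^6).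
    { destruct (Nat.eq_dec (z0 i) 0) as [E|E].
      - left. rewrite E. simpl INR. rewrite Rmax_left by lra.
        replace (d * 1) with (d^1) by ring. apply Rle_pow; [lra|lia].
      - right. intros z [_ Hz].
        assert (1 <= INR (z0 i)) by (apply (le_INR 1); lia).
        rewrite Rmax_right by lra. apply RS; try lra. apply (Hz i Hi). }
    apply (eo _ _ z0); [exact Hbox0|exact Hlt|].
    exact (generic N eps0 (e t) (vS i) _ (d^6) (box k n d z0)
               (fun z => INR (z i)) HN He0 Het HC eq_refl Hgood HA HB).
Qed.
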